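(* Let $X^n=(X[1],\dots,X[n])$ be any random sequence in $\{0,1\}^n$ and, for $t=1,\dots,n$, let $G_T[t]=(G_1[t],G_2[t],G_3[t])$ be i.i.d. over $t$ and independent of $X^n$, with $G_i[t]\sim\mathcal{B}(p_i)$, $i=1,2,3$, where $0\le p_2\le p_1\le 1$, $p_1>0$, and $\Pr[G_i[t]=1,G_j[t]=1]=0$ for all $i\ne j$ in $\{1,2,3\}$. Let $Y_i[t]=G_i[t]X[t]$ for $i=1,2$. Then $$H\left(Y_2^n \mid G_3^n X^n, G_T^n\right) \ge \frac{p_2}{p_1} H\left(Y_1^n \mid G_3^n X^n, G_T^n\right),$$ where $G_3^nX^n$ denotes the sequence $(G_3[1]X[1],\dots,G_3[n]X[n])$ and $G_T^n=(G_T[1],\dots,G_T[n])$.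
   Context: This is a binary fading broadcast channel from one transmitter to two receivers with no CSIT, meaning that the transmit sequence $X^n$ (with any input distribution) is independent of the channel gains. $\mathcal{B}(p)$ denotes the Bernoulli distribution taking value 1 with probability $p$. $H$ denotes Shannon entropy. *)

(* Defs.v *)
From mathcomp Require Import all_boot all_order all_algebra.
From mathcomp Require Import reals exp.
Set Implicit Arguments. Unset Strict Implicit. Unset Printing Implicit Defensive.
Import Order.TTheory GRing.Theory Num.Theory.
Local Open Scope ring_scope.

Definition prob {R : realType} {Omega : finType} (P : Omega -> R)
  (E : pred Omega) : R := \sum_(w | E w) P w.

(* Conditional Shannon entropy H(F | K) of the random variable F given K,
   under the pmf P on the finite sample space Omega (natural log; the
   claimed inequality is invariant under change of log base):
   H(F|K) = sum_{a,b} P(F=a,K=b) log (P(K=b) / P(F=a,K=b)), with 0 log = 0. *)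
Definition condEnt {R : realType} {Omega A B : finType} (P : Omega -> R)
  (F : Omega -> A) (K : Omega -> B) : R :=
  \sum_(a : A) \sum_(b : B)
    let pab := prob P (fun w => (F w == a) && (K w == b)) in
    let pb := prob P (fun w => K w == b) in
    if pab == 0 then 0 else pab * ln (pb / pab).

Definition gain := (bool * bool * bool)%type.
Definition G1 (g : gain) : bool := g.1.1.
Definition G2 (g : gain) : bool := g.1.2.
Definition G3 (g : gain) : bool := g.2.

(* Sample space: input sequence X^n and gain sequence G_T^n. *)
Definition omega (n : nat) : finType :=
  ({ffun 'I_n -> bool} * {ffun 'I_n -> gain})%type.

Definition jointP {R : realType} (n : nat) (PX : {ffun 'I_n -> bool} -> R)
  (q : gain -> R) : omega n -> R :=
  fun w => PX w.1 * \prod_(t < n) q (w.2 t).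

Definition Yn (n : nat) (Gi : gain -> bool) (w : omega n) : {ffun 'I_n -> bool} :=
  [ffun t => Gi (w.2 t) && w.1 t].

Definition condVar (n : nat) (w : omega n) :=
  (Yn G3 w, w.2).

(* Main.v *)
Require Import Defs.
From mathcomp Require Import all_boot all_order all_algebra.
From mathcomp Require Import reals exp.
From mathcomp Require Import ring lra.
Import Order.TTheory GRing.Theory Num.Theory.
Local Open Scope ring_scope.
Set Implicit Arguments. Unset Strict Implicit. Unset Printing Implicit Defensive.

Lemma prob_ge (R : realType) (O : finType) (P : O -> R) (E : pred O) w :
  (forall w, 0 <= P w) -> E w -> P w <= prob P E.
Proof.
move=> P0 Ew; rewrite /prob (bigD1 w) //= lerDl; exact: sumr_ge0.
Qed.

Lemma prob_ge0 (R : realType) (O : finType) (P : O -> R) (E : pred O) :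
  (forall w, 0 <= P w) -> 0 <= prob P E.
Proof. by move=> P0; apply: sumr_ge0. Qed.

Lemma ln_lb (R : realType) (x : R) : 0 < x -> 1 - x^-1 <= ln x.
Proof.
move=> x0.
have xi : 0 < x^-1 by rewrite invr_gt0.
have h : -1 < x^-1 - 1 by lra.
have := le_ln1Dx h.
rewrite addrC subrK lnV ?posrE //; lra.
Qed.

Definition pc (R : realType) (O : finType) (K : eqType) (P : O -> R) (k : O -> K) x :=
  prob P (fun y => k y == k x).
Definition hk (R : realType) (O : finType) (K : eqType) (P : O -> R) (k : O -> K) :=
  \sum_x P x * ln (pc P k x).

Lemma pc_gt0 (R : realType) (O : finType) (K : eqType) (P : O -> R) (k : O -> K) x :
  (forall w, 0 <= P w) -> 0 < P x -> 0 < pc P k x.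
Proof. by move=> P0 Px; apply: (lt_le_trans Px); apply: prob_ge => //=. Qed.

Lemma pc_ge0 (R : realType) (O : finType) (K : eqType) (P : O -> R) (k : O -> K) x :
  (forall w, 0 <= P w) -> 0 <= pc P k x.
Proof. by move=> P0; apply: prob_ge0. Qed.

Lemma pc_ext (R : realType) (O : finType) (K1 K2 : eqType) (P : O -> R)
  (k1 : O -> K1) (k2 : O -> K2) x x' :
  (forall y, (k1 y == k1 x) = (k2 y == k2 x')) -> pc P k1 x = pc P k2 x'.
Proof. by move=> H; rewrite /pc /prob; apply: eq_bigl => y; rewrite H. Qed.

Lemma key_bound (R : realType) (O : finType) (KA KB KC : eqType) (P : O -> R)
  (kA : O -> KA) (kB : O -> KB) (kC : O -> KC) :
  (forall w, 0 <= P w) -> \sum_w P w = 1 ->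
  (forall x y, kA x = kA y -> kC x = kC y) ->
  (forall x y, kB x = kB y -> kC x = kC y) ->
  \sum_x P x * (pc P kA x * pc P kB x /
     (pc P (fun y => (kA y, kB y)) x * pc P kC x)) <= 1.
Proof.
move=> P0 P1 hA hB.
set pD := pc P (fun y => (kA y, kB y)).
have E1 : forall x, P x * (pc P kA x * pc P kB x / (pD x * pc P kC x)) =
   \sum_u \sum_v ((if kA u == kA x then P u else 0) * (if kB v == kB x then P v else 0)
        * (P x / (pD x * pc P kC x))).
  move=> x; rewrite mulrA [P x * _]mulrC -mulrA.
  have -> : pc P kA x = \sum_u (if kA u == kA x then P u else 0) by rewrite /pc /prob big_mkcond.
  have -> : pc P kB x = \sum_u (if kB u == kB x then P u else 0) by rewrite /pc /prob big_mkcond.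
  rewrite big_distrlr /= mulr_suml; apply: eq_bigr => u _; rewrite mulr_suml //.
rewrite (eq_bigr _ (fun x _ => E1 x)) exchange_big /=.
under eq_bigr do rewrite exchange_big /=.
apply: (@le_trans _ _ (\sum_u \sum_v
   (if kC u == kC v then P u * P v / pc P kC u else 0))).
  apply: ler_sum => u _; apply: ler_sum => v _.
  case: (boolP [exists x0, (kA x0 == kA u) && (kB x0 == kB v)]).
    move/existsP => [x0 /andP[/eqP a0 /eqP b0]].
    have Cuv : kC u = kC v by rewrite -(hA _ _ a0) (hB _ _ b0).
    rewrite Cuv eqxx.
    have -> : \sum_x (if kA u == kA x then P u else 0) * (if kB v == kB x then P v else 0)
        * (P x / (pD x * pc P kC x)) =
       \sum_x (if (kA x, kB x) == (kA x0, kB x0) then P x else 0) *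
         (P u * P v / (pD x0 * pc P kC u)).
      apply: eq_bigr => x _.
      case: (kA u =P kA x) => ha; case: (kB v =P kB x) => hb /=; rewrite ?mul0r ?mulr0;
        last 3 first.
      - by rewrite ?mul0r; case: eqP => [E|]; [exfalso; have Ha' := congr1 fst E; have Hb' := congr1 snd E; simpl in *; congruence | rewrite !mul0r].
      - by rewrite ?mul0r; case: eqP => [E|]; [exfalso; have Ha' := congr1 fst E; have Hb' := congr1 snd E; simpl in *; congruence | rewrite !mul0r].
      - by rewrite ?mul0r; case: eqP => [E|]; [exfalso; have Ha' := congr1 fst E; have Hb' := congr1 snd E; simpl in *; congruence | rewrite !mul0r].
        rewrite -ha -hb -a0 -b0 eqxx.
        have -> : pD x = pD x0.
          by apply: pc_ext => y; rewrite -ha -hb -a0 -b0.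
        have -> : pc P kC x = pc P kC u.
          by apply: pc_ext => y; rewrite (hA _ _ ha).
        by rewrite /=; ring.
    rewrite -mulr_suml.
    have -> : \sum_x (if (kA x, kB x) == (kA x0, kB x0) then P x else 0) = pD x0.
      by rewrite /pD /pc /prob [RHS]big_mkcond.
    have hq : 0 <= P u * P v / pc P kC u.
      by apply: divr_ge0; [apply: mulr_ge0 | apply: pc_ge0].
    case: (pD x0 =P 0) => [->|Hd]; first by rewrite mul0r.
    have hdv : pD x0 * (pD x0)^-1 = 1 by apply: mulfV; apply/eqP.
    have -> : pD x0 * (P u * P v / (pD x0 * pc P kC u)) = P u * P v / pc P kC u; last by [].
    rewrite invfM.
    transitivity (P u * P v / pc P kC u * (pD x0 * (pD x0)^-1)); first by ring.
    by rewrite hdv mulr1.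
  move=> /existsPn Hn.
  rewrite big1; last first.
    move=> x _; case: (kA u =P kA x) => ha; case: (kB v =P kB x) => hb /=;
      try by rewrite ?(mul0r, mulr0).
    by move: (Hn x); rewrite ha hb !eqxx.
  by case: ifP => _ //; apply: divr_ge0; [apply: mulr_ge0 | apply: pc_ge0].
rewrite -P1; apply: ler_sum => u _.
have -> : \sum_v (if kC u == kC v then P u * P v / pc P kC u else 0) =
   P u / pc P kC u * pc P kC u.
  rewrite /pc /prob [X in _ * X]big_mkcond mulr_sumr; apply: eq_bigr => v _.
  by rewrite eq_sym; case: ifP => _; [rewrite mulrAC | rewrite mulr0].
case: (pc P kC u =P 0) => [->|Hc]; first by rewrite mulr0.
by rewrite divfK //; apply/eqP.
Qed.

Lemma hk_submod (R : realType) (O : finType) (KA KB KC : eqType) (P : O -> R)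
  (kA : O -> KA) (kB : O -> KB) (kC : O -> KC) :
  (forall w, 0 <= P w) -> \sum_w P w = 1 ->
  (forall x y, kA x = kA y -> kC x = kC y) ->
  (forall x y, kB x = kB y -> kC x = kC y) ->
  hk P kA + hk P kB <= hk P (fun y => (kA y, kB y)) + hk P kC.
Proof.
move=> P0 P1 hA hB; rewrite -subr_ge0.
have Kb := key_bound P0 P1 hA hB.
set pD := pc P (fun y => (kA y, kB y)).
rewrite /hk -!big_split /= -sumrB.
apply: (@le_trans _ _ (\sum_x (P x - P x * (pc P kA x * pc P kB x /
     (pD x * pc P kC x))))).
  by rewrite sumrB P1 subr_ge0.
apply: ler_sum => x _.
have [Px0|Pxn] := eqVneq (P x) 0.
  by rewrite Px0 !mul0r; lra.
have Pxp : 0 < P x by rewrite lt_def Pxn P0.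
have ha : 0 < pc P kA x by apply: pc_gt0.
have hb : 0 < pc P kB x by apply: pc_gt0.
have hc : 0 < pc P kC x by apply: pc_gt0.
have hd : 0 < pD x by apply: pc_gt0.
have hr : 0 < pD x * pc P kC x / (pc P kA x * pc P kB x).
  by apply: divr_gt0; apply: mulr_gt0.
have L := ln_lb hr.
rewrite ln_div ?posrE ?mulr_gt0 // !lnM ?posrE // invf_div in L.
have := ler_wpM2l (ltW Pxp) L.
lra.
Qed.
Lemma condEnt_pt (R : realType) (O A B : finType) (P : O -> R)
  (F : O -> A) (K : O -> B) : (forall w, 0 <= P w) ->
  condEnt P F K = \sum_w P w * ln (prob P (fun v => K v == K w) /
      prob P (fun v => (F v == F w) && (K v == K w))).
Proof.
move=> P0; rewrite /condEnt.
transitivity (\sum_a \sum_b \sum_(w | (F w == a) && (K w == b))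
   P w * ln (prob P (fun v => K v == K w) /
      prob P (fun v => (F v == F w) && (K v == K w)))).
  apply: eq_bigr => a _; apply: eq_bigr => b _ /=.
  case: eqP => [H0|Hne].
    rewrite big1 // => w Hw.
    have : P w <= 0 by rewrite -H0; exact: prob_ge.
    by move=> Hle; rewrite (le_anti (andb_true_intro (conj Hle (P0 w)))) mul0r.
  rewrite {1}/prob big_distrl /=; apply: eq_bigr => w /andP[/eqP -> /eqP ->].
  by [].
under eq_bigr do under eq_bigr do rewrite big_mkcond.
under eq_bigr do rewrite exchange_big /=.
rewrite exchange_big /=; apply: eq_bigr => w _.
rewrite (bigD1 (F w)) //= [X in _ + X]big1 ?addr0; last first.
  move=> a Ha; rewrite big1 // => b _; by rewrite eq_sym (negbTE Ha).
rewrite (bigD1 (K w)) //= !eqxx big1 ?addr0 //.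
by move=> b Hb; rewrite eq_sym (negbTE Hb) andbF.
Qed.

Definition mask n (S : {set 'I_n}) (x : {ffun 'I_n -> bool}) : {ffun 'I_n -> bool} :=
  [ffun t => (t \in S) && x t].

Lemma mask_eqE n (S : {set 'I_n}) x y :
  (mask S y == mask S x) = [forall t, (t \in S) ==> (y t == x t)].
Proof.
apply/eqP/forallP => [H t|H].
  apply/implyP => tS; have := congr1 (fun f : {ffun 'I_n -> bool} => f t) H; rewrite !ffunE tS /=.
  by move=> ->.
apply/ffunP => t; rewrite !ffunE; have := H t; case: (t \in S) => //= /eqP ->. done.
Qed.

Definition Hs (R : realType) n (PX : {ffun 'I_n -> bool} -> R) (S : {set 'I_n}) :=
  - hk PX (mask S).

Lemma Hs_submod (R : realType) n (PX : {ffun 'I_n -> bool} -> R) (A B : {set 'I_n}) :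
  (forall w, 0 <= PX w) -> \sum_w PX w = 1 ->
  Hs PX (A :|: B) + Hs PX (A :&: B) <= Hs PX A + Hs PX B.
Proof.
move=> P0 P1.
have := hk_submod (kA := mask A) (kB := mask B) (kC := mask (A :&: B)) P0 P1.
have E : hk PX (fun y => (mask A y, mask B y)) = hk PX (mask (A :|: B)).
  rewrite /hk; apply: eq_bigr => x _; congr (_ * ln _); apply: pc_ext => y.
  rewrite xpair_eqE !mask_eqE; apply/andP/forallP => [[/forallP H1 /forallP H2] t|H].
    by rewrite inE; apply/implyP => /orP[tA|tB]; [move/implyP: (H1 t) | move/implyP: (H2 t)]; apply.
  by split; apply/forallP => t; apply/implyP => ts; move/implyP: (H t); apply; rewrite inE ts ?orbT.
rewrite E /Hs; move=> H; have : hk PX (mask A) + hk PX (mask B) <=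
  hk PX (mask (A :|: B)) + hk PX (mask (A :&: B)).
  apply: H.
    move=> x y /eqP; rewrite eq_sym mask_eqE => /forallP H; apply/eqP; rewrite eq_sym mask_eqE.
    by apply/forallP => t; apply/implyP; rewrite inE => /andP[tA _]; move/implyP: (H t); apply.
  move=> x y /eqP; rewrite eq_sym mask_eqE => /forallP H; apply/eqP; rewrite eq_sym mask_eqE.
  by apply/forallP => t; apply/implyP; rewrite inE => /andP[_ tB]; move/implyP: (H t); apply.
lra.
Qed.

Lemma Hs_mono (R : realType) n (PX : {ffun 'I_n -> bool} -> R) (A B : {set 'I_n}) :
  (forall w, 0 <= PX w) -> A \subset B -> Hs PX A <= Hs PX B.
Proof.
move=> P0 AB; rewrite /Hs lerN2 /hk; apply: ler_sum => x _.
have [Px0|Pxn] := eqVneq (PX x) 0; first by rewrite Px0 !mul0r.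
have Pxp : 0 < PX x by rewrite lt_def Pxn P0.
apply: ler_wpM2l; first exact: ltW.
rewrite ler_ln ?posrE ?pc_gt0 //.
rewrite /pc /prob [X in _ <= X]big_mkcond [X in X <= _]big_mkcond /=.
apply: ler_sum => y _; case: ifP => hB; case: ifP => hA //.
move: hA; rewrite mask_eqE => /negbT /forallPn [t]; rewrite negb_imply => /andP[tA ne].
move: hB; rewrite mask_eqE => /forallP /(_ t) /implyP; rewrite (subsetP AB t tA) => /(_ isT).
by rewrite (negbTE ne).
Qed.

Definition Sg n (Gi : gain -> bool) (g : {ffun 'I_n -> gain}) : {set 'I_n} :=
  [set t | Gi (g t)].
Definition Qg (R : realType) n (q : gain -> R) (g : {ffun 'I_n -> gain}) : R :=
  \prod_(t < n) q (g t).
Definition J (R : realType) n (PX : {ffun 'I_n -> bool} -> R) (A T : {set 'I_n}) :=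
  Hs PX (A :|: T) - Hs PX T.

Lemma Yn_mask n Gi (w : omega n) : Yn Gi w = mask (Sg Gi w.2) w.1.
Proof. by apply/ffunP => t; rewrite !ffunE inE. Qed.

Lemma prob_joint (R : realType) n (PX : {ffun 'I_n -> bool} -> R) (q : gain -> R)
  (E : pred {ffun 'I_n -> bool}) g :
  prob (jointP PX q) (fun v : omega n => E v.1 && (v.2 == g)) = Qg q g * prob PX E.
Proof.
rewrite /prob big_mkcond /jointP /=.
transitivity (\sum_a \sum_(b : {ffun 'I_n -> gain})
   (if E a && (b == g) then PX a * \prod_(t < n) q (b t) else 0)).
  by rewrite pair_bigA.
rewrite [X in _ * X]big_mkcond mulr_sumr; apply: eq_bigr => a _.
rewrite (bigD1 g) //= (eqxx g) andbT [X in _ + X]big1 ?addr0.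
  by case: (E a); rewrite /Qg ?mulr0 // mulrC.
by move=> b /negbTE ->; rewrite andbF.
Qed.

Lemma mask_U n (A T : {set 'I_n}) x y :
  (mask A y == mask A x) && (mask T y == mask T x) = (mask (A :|: T) y == mask (A :|: T) x).
Proof.
rewrite !mask_eqE; apply/andP/forallP => [[/forallP H1 /forallP H2] t|H].
  by rewrite inE; apply/implyP => /orP[tA|tB]; [move/implyP: (H1 t) | move/implyP: (H2 t)]; apply.
by split; apply/forallP => t; apply/implyP => ts; move/implyP: (H t); apply; rewrite inE ts ?orbT.
Qed.

Lemma decomp (R : realType) n (PX : {ffun 'I_n -> bool} -> R) (q : gain -> R) Gi :
  (forall x, 0 <= PX x) -> (forall g, 0 <= q g) ->
  condEnt (jointP PX q) (Yn Gi) (@condVar n) =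
  \sum_g Qg q g * J PX (Sg Gi g) (Sg G3 g).
Proof.
move=> P0 q0.
have J0 : forall w, 0 <= jointP PX q w.
  by move=> w; apply: mulr_ge0 => //; apply: prodr_ge0.
rewrite condEnt_pt //.
transitivity (\sum_x \sum_(g : {ffun 'I_n -> gain}) PX x * Qg q g *
   ln (pc PX (mask (Sg G3 g)) x / pc PX (mask (Sg Gi g :|: Sg G3 g)) x)).
  rewrite pair_bigA /=; apply: eq_bigr => [[x g]] _ /=.
  have E1 : prob (jointP PX q) (fun v => condVar v == condVar (x, g)) =
      Qg q g * pc PX (mask (Sg G3 g)) x.
    rewrite -prob_joint /prob; apply: eq_bigl => [[x' g']] /=.
    by rewrite /condVar xpair_eqE /=; case: (g' =P g) => [->|]; rewrite ?andbT ?andbF // !Yn_mask.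
  have E2 : prob (jointP PX q) (fun v => (Yn Gi v == Yn Gi (x, g)) &&
        (condVar v == condVar (x, g))) =
      Qg q g * pc PX (mask (Sg Gi g :|: Sg G3 g)) x.
    rewrite -prob_joint /prob; apply: eq_bigl => [[x' g']] /=.
    rewrite /condVar xpair_eqE /=; case: (g' =P g) => [->|]; rewrite ?andbT ?andbF //.
    by rewrite !Yn_mask /= mask_U.
  rewrite E1 E2 /jointP /= -/(Qg q g).
  have [Q0|Qn] := eqVneq (Qg q g) 0; first by rewrite Q0 !(mulr0, mul0r).
  by rewrite invfM mulrACA mulfV ?mul1r.
rewrite exchange_big; apply: eq_bigr => g _.
rewrite /J /Hs /hk opprK addrC -sumrB mulr_sumr; apply: eq_bigr => x _.
have [Px0|Pxn] := eqVneq (PX x) 0; first by rewrite Px0 !mul0r subrr mulr0.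
have Pxp : 0 < PX x by rewrite lt_def Pxn P0.
rewrite ln_div ?posrE ?pc_gt0 //; ring.
Qed.

Definition rho (R : realType) (r : R) (b : bool) : R := if b then r else 1 - r.

Lemma sum_prod_rho (R : realType) n (r : R) (i : 'I_n) :
  \sum_(e : {ffun 'I_n -> bool}) (\prod_t rho r (e t)) * (e i)%:R = r.
Proof.
transitivity (\sum_(e : {ffun 'I_n -> bool})
   \prod_t (if t == i then rho r (e t) * (e t)%:R else rho r (e t))).
  apply: eq_bigr => e _.
  rewrite (bigD1 i) //= [in RHS](bigD1 i) //= eqxx -mulrA [_ * (e i)%:R]mulrC mulrA.
  congr (_ * _); apply: eq_bigr => t /negbTE ->; by [].
rewrite -(bigA_distr_bigA (fun t b => if t == i then rho r b * b%:R else rho r b)) /=.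
rewrite (bigD1 i) //= [X in _ * X]big1.
  by rewrite eqxx big_bool /rho /= mulr1 mulr0 addr0 mulr1.
by move=> t /negbTE ->; rewrite big_bool /rho /=; ring.
Qed.

Lemma sum_prod_rho1 (R : realType) n (r : R) :
  \sum_(e : {ffun 'I_n -> bool}) (\prod_(t < n) rho r (e t)) = 1.
Proof.
rewrite -(bigA_distr_bigA (fun t b => rho r b)) /= big1 // => t _; rewrite big_bool /rho /=; ring.
Qed.

Definition pre n (k : nat) : {set 'I_n} := [set j : 'I_n | (j < k)%N].
Definition Eset n (e : {ffun 'I_n -> bool}) : {set 'I_n} := [set t | e t].

Lemma J_marg (R : realType) n (PX : {ffun 'I_n -> bool} -> R) (T X Y : {set 'I_n}) i :
  (forall w, 0 <= PX w) -> \sum_w PX w = 1 -> X \subset Y ->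
  J PX (Y :|: [set i]) T - J PX Y T <= J PX (X :|: [set i]) T - J PX X T.
Proof.
move=> P0 P1 XY.
have S := Hs_submod (X :|: [set i] :|: T) (Y :|: T) P0 P1.
have eU : (X :|: [set i] :|: T) :|: (Y :|: T) = Y :|: [set i] :|: T.
  apply/setP => j; have := subsetP XY j; rewrite !inE.
  by case: (j \in X); case: (j \in Y); case: (j == i); case: (j \in T) => //= H; have := H isT.
have M : Hs PX (X :|: T) <= Hs PX ((X :|: [set i] :|: T) :&: (Y :|: T)).
  apply: Hs_mono => //; apply/subsetP => j; have := subsetP XY j; rewrite !inE.
  by case: (j \in X); case: (j \in Y); case: (j == i); case: (j \in T) => //= H; have := H isT.
rewrite eU in S; rewrite /J; lra.
Qed.

Lemma J_tel (R : realType) n (PX : {ffun 'I_n -> bool} -> R) (T B : {set 'I_n}) :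
  J PX B T = \sum_(i < n) (J PX (B :&: pre n i.+1) T - J PX (B :&: pre n i) T).
Proof.
rewrite -(big_mkord xpredT (fun i => J PX (B :&: pre n i.+1) T - J PX (B :&: pre n i) T)).
rewrite telescope_sumr //.
have -> : B :&: pre n n = B by apply/setP => j; rewrite !inE ltn_ord andbT.
have -> : B :&: pre n 0 = set0 by apply/setP => j; rewrite !inE ltn0 andbF.
by rewrite /J set0U subrr subr0.
Qed.

Lemma pre_step n (B : {set 'I_n}) (i : 'I_n) :
  B :&: pre n i.+1 = if i \in B then (B :&: pre n i) :|: [set i] else B :&: pre n i.
Proof.
apply/setP => j; case: ifP => iB; rewrite !inE ltnS leq_eqVlt.
  have -> : (nat_of_ord j == nat_of_ord i) = (j == i) by [].
  by case: eqP => [->|_]; rewrite ?iB ?ltnn ?orbF ?orbT ?andbT.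
have -> : (nat_of_ord j == nat_of_ord i) = (j == i) by [].
by case: eqP => [->|_]; rewrite ?iB ?ltnn ?orbF ?orbT ?andbT.
Qed.

Lemma J_step (R : realType) n (PX : {ffun 'I_n -> bool} -> R) (T A : {set 'I_n})
  (e : {ffun 'I_n -> bool}) (i : 'I_n) :
  (forall w, 0 <= PX w) -> \sum_w PX w = 1 ->
  (e i)%:R * (J PX (A :&: pre n i.+1) T - J PX (A :&: pre n i) T) <=
  J PX ((A :&: Eset e) :&: pre n i.+1) T - J PX ((A :&: Eset e) :&: pre n i) T.
Proof.
move=> P0 P1; rewrite !pre_step !inE.
case hA: (i \in A); case he: (e i) => /=; rewrite ?subrr ?mul0r ?mulr0 ?mul1r //.
apply: J_marg => //; apply/subsetP => j; rewrite !inE => /andP[/andP[-> _] ->].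
by [].
Qed.

Lemma han (R : realType) n (PX : {ffun 'I_n -> bool} -> R) (T A : {set 'I_n}) (r : R) :
  (forall w, 0 <= PX w) -> \sum_w PX w = 1 -> 0 <= r <= 1 ->
  r * J PX A T <= \sum_(e : {ffun 'I_n -> bool}) (\prod_t rho r (e t)) * J PX (A :&: Eset e) T.
Proof.
move=> P0 P1 /andP[r0 r1].
have R0 : forall e : {ffun 'I_n -> bool}, 0 <= \prod_t rho r (e t).
  by move=> e; apply: prodr_ge0 => t _; rewrite /rho; case: (e t); lra.
apply: (@le_trans _ _ (\sum_(e : {ffun 'I_n -> bool}) (\prod_t rho r (e t)) *
   \sum_(i < n) (e i)%:R * (J PX (A :&: pre n i.+1) T - J PX (A :&: pre n i) T))).
  rewrite (J_tel PX T A) mulr_sumr.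
  under [X in _ <= X]eq_bigr do rewrite mulr_sumr.
  rewrite exchange_big /=; apply: ler_sum => i _.
  rewrite -{1}(sum_prod_rho r i) mulr_suml; apply: ler_sum => e _.
  by rewrite mulrA.
apply: ler_sum => e _; apply: ler_wpM2l => //.
rewrite (J_tel PX T (A :&: Eset e)); apply: ler_sum => i _; exact: J_step.
Qed.

Lemma sum_ind2 (R : realType) n (F : {set 'I_n} -> {set 'I_n} -> R) A0 T0 :
  \sum_A \sum_T ((A0 == A) && (T0 == T))%:R * F A T = F A0 T0.
Proof.
rewrite (bigD1 A0) //= [X in _ + X]big1 ?addr0.
  rewrite (bigD1 T0) //= !eqxx /= mul1r [X in _ + X]big1 ?addr0 //.
  by move=> T /negbTE; rewrite eq_sym => ->; rewrite mul0r.
by move=> A /negbTE; rewrite eq_sym => ->; rewrite big1 // => T _; rewrite mul0r.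
Qed.

Lemma ind_prod (R : realType) n (P P' : 'I_n -> bool) (A T : {set 'I_n}) :
  (([set t | P t] == A) && ([set t | P' t] == T))%:R =
  \prod_t ((P t == (t \in A)) && (P' t == (t \in T)))%:R :> R.
Proof.
case: (boolP [forall t, (P t == (t \in A)) && (P' t == (t \in T))]) => [/forallP H|].
  have -> : [set t | P t] = A.
    by apply/setP => t; rewrite inE; have /andP[/eqP -> _] := H t.
  have -> : [set t | P' t] = T.
    by apply/setP => t; rewrite inE; have /andP[_ /eqP ->] := H t.
  by rewrite !eqxx /= big1 // => t _; rewrite (H t).
move=> /forallPn [t Ht]; rewrite (bigD1 t) //= (negbTE Ht) mul0r.
case: eqP => [E1|]; case: eqP => [E2|] //=.
by move: Ht; rewrite -E1 -E2 !inE !eqxx.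
Qed.

Lemma expand (R : realType) n (I : finType) (w : I -> R)
  (Psi : {set 'I_n} -> {set 'I_n} -> R) (f h : I -> {set 'I_n}) :
  \sum_i w i * Psi (f i) (h i) =
  \sum_A \sum_T Psi A T * \sum_i w i * ((f i == A) && (h i == T))%:R.
Proof.
transitivity (\sum_i \sum_A \sum_T w i * (((f i == A) && (h i == T))%:R * Psi A T)).
  apply: eq_bigr => i _; rewrite -{1}(sum_ind2 Psi (f i) (h i)) mulr_sumr.
  by apply: eq_bigr => A _; rewrite mulr_sumr.
rewrite exchange_big; apply: eq_bigr => A _.
rewrite exchange_big; apply: eq_bigr => T _.
rewrite mulr_sumr; apply: eq_bigr => i _; ring.
Qed.

Lemma coupling (R : realType) n (q : gain -> R) (r : R)
  (Psi : {set 'I_n} -> {set 'I_n} -> R) :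
  (forall a b : bool, \sum_x q x * ((G2 x == a) && (G3 x == b))%:R =
       \sum_x \sum_c q x * rho r c * (((G1 x && c) == a) && (G3 x == b))%:R) ->
  \sum_g Qg q g * Psi (Sg G2 g) (Sg G3 g) =
  \sum_g Qg q g * \sum_(e : {ffun 'I_n -> bool})
      (\prod_t rho r (e t)) * Psi (Sg G1 g :&: Eset e) (Sg G3 g).
Proof.
move=> Hco.
have -> : \sum_g Qg q g * \sum_(e : {ffun 'I_n -> bool})
      (\prod_t rho r (e t)) * Psi (Sg G1 g :&: Eset e) (Sg G3 g) =
    \sum_(p : {ffun 'I_n -> gain} * {ffun 'I_n -> bool})
      (Qg q p.1 * \prod_t rho r (p.2 t)) * Psi (Sg G1 p.1 :&: Eset p.2) (Sg G3 p.1).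
  transitivity (\sum_g \sum_(e : {ffun 'I_n -> bool})
      (Qg q g * \prod_t rho r (e t)) * Psi (Sg G1 g :&: Eset e) (Sg G3 g)).
    apply: eq_bigr => g _; rewrite mulr_sumr.
    by apply: eq_bigr => e _; rewrite mulrA.
  by rewrite pair_bigA.
rewrite expand [RHS]expand; apply: eq_bigr => A _; apply: eq_bigr => T _.
congr (_ * _).
transitivity (\prod_(t < n) \sum_x q x *
    ((G2 x == (t \in A)) && (G3 x == (t \in T)))%:R).
  rewrite (bigA_distr_bigA (fun t x => q x *
    ((G2 x == (t \in A)) && (G3 x == (t \in T)))%:R)) /=.
  apply: eq_bigr => g _; rewrite /Qg /Sg ind_prod -big_split //.
transitivity (\prod_(t < n) \sum_x \sum_c q x * rho r c *
    (((G1 x && c) == (t \in A)) && (G3 x == (t \in T)))%:R).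
  by apply: eq_bigr => t _; apply: Hco.
transitivity (\sum_g \sum_(e : {ffun 'I_n -> bool}) (Qg q g * \prod_t rho r (e t)) *
   ((Sg G1 g :&: Eset e == A) && (Sg G3 g == T))%:R); last by rewrite pair_bigA.
rewrite (bigA_distr_bigA (fun t x => \sum_c q x * rho r c *
    (((G1 x && c) == (t \in A)) && (G3 x == (t \in T)))%:R)) /=.
apply: eq_bigr => g _.
rewrite (bigA_distr_bigA (fun t c => q (g t) * rho r c *
    (((G1 (g t) && c) == (t \in A)) && (G3 (g t) == (t \in T)))%:R)) /=.
apply: eq_bigr => e _.
have -> : Sg G1 g :&: Eset e = [set t | G1 (g t) && e t].
  by apply/setP => t; rewrite !inE.
rewrite /Qg /Sg ind_prod -!big_split //.
Qed.

Lemma sum_gain (R : realType) (F : gain -> R) :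
  \sum_g F g = F (true, true, true) + F (true, true, false) + F (true, false, true)
    + F (true, false, false) + F (false, true, true) + F (false, true, false)
    + F (false, false, true) + F (false, false, false).
Proof.
rewrite (eq_bigr (fun p : gain => F (p.1, p.2))); last by case.
rewrite -(pair_bigA _ (fun a b => F (a, b))) /=.
rewrite (eq_bigr (fun p : bool * bool => \sum_b F ((p.1, p.2), b))); last by case.
rewrite -(pair_bigA _ (fun a c => \sum_b F ((a, c), b))) /=.
rewrite !big_bool /=; ring.
Qed.

Unset Implicit Arguments.

Theorem lemma1 (R : realType) (n : nat)
  (PX : {ffun 'I_n -> bool} -> R) (q : gain -> R) (p1 p2 p3 : R) :
  (forall x, 0 <= PX x) -> \sum_x PX x = 1 ->
  (forall g, 0 <= q g) -> \sum_g q g = 1 ->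
  \sum_(g | G1 g) q g = p1 ->
  \sum_(g | G2 g) q g = p2 ->
  \sum_(g | G3 g) q g = p3 ->
  0 <= p2 -> p2 <= p1 -> p1 <= 1 -> 0 < p1 ->
  \sum_(g | G1 g && G2 g) q g = 0 ->
  \sum_(g | G1 g && G3 g) q g = 0 ->
  \sum_(g | G2 g && G3 g) q g = 0 ->
  condEnt (jointP PX q) (Yn G2) (@condVar n)
    >= p2 / p1 * condEnt (jointP PX q) (Yn G1) (@condVar n).
Proof.
move=> P0 P1 q0 q1 h1 h2 h3 p20 p21 p11 p1p o12 o13 o23.
rewrite big_mkcond sum_gain /G1 /G2 /G3 /= in h1.
rewrite big_mkcond sum_gain /G1 /G2 /G3 /= in h2.
rewrite big_mkcond sum_gain /G1 /G2 /G3 /= in h3.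
rewrite big_mkcond sum_gain /G1 /G2 /G3 /= in o12.
rewrite big_mkcond sum_gain /G1 /G2 /G3 /= in o13.
rewrite big_mkcond sum_gain /G1 /G2 /G3 /= in o23.
rewrite sum_gain in q1.
have := q0 (true, true, true); have := q0 (true, true, false);
have := q0 (true, false, true); have := q0 (true, false, false);
have := q0 (false, true, true); have := q0 (false, true, false);
have := q0 (false, false, true); have := q0 (false, false, false).
move=> c8 c7 c6 c5 c4 c3 c2 c1.
have z1 : q (true, true, true) = 0 by lra.
have z2 : q (true, true, false) = 0 by lra.
have z3 : q (true, false, true) = 0 by lra.
have z4 : q (false, true, true) = 0 by lra.
set r := p2 / p1.
have hr : r * q (true, false, false) = q (false, true, false).
  have -> : q (true, false, false) = p1 by lra.
  rewrite /r divfK; [lra | by apply/eqP; lra].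
have r0 : 0 <= r by rewrite /r; apply: divr_ge0 => //; lra.
have r1 : r <= 1 by rewrite /r ler_pdivrMr // mul1r.
have Hco : forall a b : bool, \sum_x q x * ((G2 x == a) && (G3 x == b))%:R =
       \sum_x \sum_c q x * rho r c * (((G1 x && c) == a) && (G3 x == b))%:R.
  move=> a b; rewrite !sum_gain !big_bool /rho /G1 /G2 /G3 /= z1 z2 z3 z4.
  by case: a; case: b => /=; lra.
rewrite !decomp // (coupling (J PX) Hco) mulr_sumr.
apply: ler_sum => g _; rewrite mulrCA; apply: ler_wpM2l.
  by apply: prodr_ge0.
apply: han => //; lra.
Qed.
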